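(* Let $c\in C^\infty(\mathbb R)$ and let $u$ satisfy $u_t=uu_1+\hbar^2c(u)u_1^3$ (with $u_k=\partial_x^ku$). Define the polynomial Miura map $$\begin{aligned}v={}&u-\hbar^2cu_1^2+\hbar^4\Big(\tfrac43cc'u_1^4+2c^2u_1^2u_2\Big)\\&+\hbar^6\Big(-\tfrac{28}{15}c{c'}^2u_1^6-\tfrac{14}{15}c^2c''u_1^6-\tfrac{26}{3}c^2c'u_1^4u_2-4c^3u_1^2u_2^2-\tfrac43c^3u_1^3u_3\Big)\\&+\hbar^8\Big(\tfrac{836}{315}c{c'}^3u_1^8+\tfrac{1268}{315}c^2c'c''u_1^8+\tfrac{16}{35}c^3c'''u_1^8+\tfrac{1138}{45}c^2{c'}^2u_1^6u_2+\tfrac{128}{15}c^3c''u_1^6u_2\\&\qquad+\tfrac{112}{3}c^3c'u_1^4u_2^2+8c^4u_1^2u_2^3+8c^3c'u_1^5u_3+8c^4u_1^3u_2u_3+\tfrac23c^4u_1^4u_4\Big),\end{aligned}$$ where $c$ and its derivatives are evaluated at $u$. Then $v_t-vv_x=O(\hbar^{10})$ as a formal expansion in $\hbar$; i.e. the equation $u_t=uu_x+\hbar^2c(u)u_x^3$ is trivial (polynomially Miura-equivalent to the Monge equation $v_t=vv_x$) up to $O(\hbar^8)$.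
   Context: $\hbar$ is a formal parameter; primes on $c$ denote derivatives with respect to $u$; $v_t$ is computed by the chain rule using the evolution equation for $u$. *)

(* Defs.v *)
From HB Require Import structures.
From mathcomp Require Import all_boot all_order all_algebra.
From mathcomp Require Import all_classical all_reals all_analysis.
Set Implicit Arguments. Unset Strict Implicit. Unset Printing Implicit Defensive.
Import Order.TTheory GRing.Theory Num.Theory.
Local Open Scope ring_scope.
Local Open Scope classical_set_scope.

Definition smooth {R : realType} (f : R -> R) : Prop :=
  forall (n : nat) (x : R), derivable ((derive1n n f)) x 1.

(* The Miura polynomial, as a function of hbar, of the jets
   u0 = u, u1..u4 = u_x .. u_xxxx, and c0..c3 = c(u), c'(u), c''(u), c'''(u). *)
Definition miura_poly {R : realType} (h u0 u1 u2 u3 u4 c0 c1 c2 c3 : R) : R :=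
  u0 - h ^+ 2 * c0 * u1 ^+ 2
  + h ^+ 4 * (4 / 3 * c0 * c1 * u1 ^+ 4 + 2 * c0 ^+ 2 * u1 ^+ 2 * u2)
  + h ^+ 6 * (- (28 / 15) * c0 * c1 ^+ 2 * u1 ^+ 6
              - 14 / 15 * c0 ^+ 2 * c2 * u1 ^+ 6
              - 26 / 3 * c0 ^+ 2 * c1 * u1 ^+ 4 * u2
              - 4 * c0 ^+ 3 * u1 ^+ 2 * u2 ^+ 2
              - 4 / 3 * c0 ^+ 3 * u1 ^+ 3 * u3)
  + h ^+ 8 * (836 / 315 * c0 * c1 ^+ 3 * u1 ^+ 8
              + 1268 / 315 * c0 ^+ 2 * c1 * c2 * u1 ^+ 8
              + 16 / 35 * c0 ^+ 3 * c3 * u1 ^+ 8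
              + 1138 / 45 * c0 ^+ 2 * c1 ^+ 2 * u1 ^+ 6 * u2
              + 128 / 15 * c0 ^+ 3 * c2 * u1 ^+ 6 * u2
              + 112 / 3 * c0 ^+ 3 * c1 * u1 ^+ 4 * u2 ^+ 2
              + 8 * c0 ^+ 4 * u1 ^+ 2 * u2 ^+ 3
              + 8 * c0 ^+ 3 * c1 * u1 ^+ 5 * u3
              + 8 * c0 ^+ 4 * u1 ^+ 3 * u2 * u3
              + 2 / 3 * c0 ^+ 4 * u1 ^+ 4 * u4).

Definition miura {R : realType} (h : R) (c w : R -> R) : R -> R :=
  fun x => miura_poly h (w x) ((derive1n 1 w) x) ((derive1n 2 w) x) ((derive1n 3 w) x) ((derive1n 4 w) x)
             (c (w x)) ((derive1n 1 c) (w x)) ((derive1n 2 c) (w x)) ((derive1n 3 c) (w x)).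

Definition rhs {R : realType} (h : R) (c w : R -> R) : R -> R :=
  fun x => w x * (derive1n 1 w) x + h ^+ 2 * c (w x) * ((derive1n 1 w) x) ^+ 3.

(* v_t computed by the chain rule using the evolution equation:
   v_t = sum_k (dv/du_k) * D_x^k (u_t), i.e. the derivative of v along the
   evolutionary vector field u_t = rhs, realised as the Gateaux derivative
   d/de v[u + e * rhs(u)] at e = 0. *)
Definition miura_t {R : realType} (h : R) (c u : R -> R) : R -> R :=
  fun x => derive1 (fun e : R => miura h c (fun y => u y + e * rhs h c u y) x) 0.

(* Main.v *)
Require Import Defs.
From HB Require Import structures.
From mathcomp Require Import all_boot all_order all_algebra.
From mathcomp Require Import all_classical all_reals all_analysis.
From mathcomp Require Import ring lra.
Import Order.TTheory GRing.Theory Num.Theory.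
Local Open Scope ring_scope.
Local Open Scope classical_set_scope.

Section D.
Variable R : realType.
Implicit Types (f g : R -> R) (x a b : R).

Lemma dD f g x a b : is_derive x 1 f a -> is_derive x 1 g b ->
  is_derive x 1 (fun y => f y + g y) (a + b).
Proof. move=> ? ?; exact: (@is_deriveD _ _ _ f g). Qed.
Lemma dB f g x a b : is_derive x 1 f a -> is_derive x 1 g b ->
  is_derive x 1 (fun y => f y - g y) (a - b).
Proof. move=> ? ?; exact: (@is_deriveB _ _ _ f g). Qed.
Lemma dN f x a : is_derive x 1 f a -> is_derive x 1 (fun y => - f y) (- a).
Proof. move=> ?; exact: (@is_deriveN _ _ _ f). Qed.
Lemma dM f g x a b : is_derive x 1 f a -> is_derive x 1 g b ->
  is_derive x 1 (fun y => f y * g y) (f x * b + g x * a).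
Proof. move=> df dg; have := is_deriveM df dg. rewrite /GRing.scale /=.
by have -> : (fun y => f y * g y) = f * g by apply: funext. Qed.
Lemma dX f n x a : is_derive x 1 f a ->
  is_derive x 1 (fun y => f y ^+ n) (n%:R * f x ^+ n.-1 * a).
Proof. move=> df; have := is_deriveX n df. rewrite /GRing.scale /=.
by have -> : (fun y => f y ^+ n) = f ^+ n by apply: funext => y; rewrite /= ?exprfctE. Qed.
Lemma dXS f n x a : is_derive x 1 f a ->
  is_derive x 1 (fun y => f y ^+ n.+1) (n.+1%:R * f x ^+ n * a).
Proof. exact: dX. Qed.
Lemma dC (k : R) x : is_derive x 1 (fun _ => k) 0.
Proof. exact: is_derive_cst. Qed.
Lemma dI x : is_derive x 1 (fun y => y) 1.
Proof. exact: is_derive_id. Qed.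
Lemma dcomp f g x a b : is_derive (g x) 1 f a -> is_derive x 1 g b ->
  is_derive x 1 (fun y => f (g y)) (a * b).
Proof. move=> ? ?; exact: (@is_derive1_comp _ f g). Qed.

Lemma dleaf f A (k : nat) x a : smooth f -> is_derive x 1 A a ->
  is_derive x 1 (fun y => derive1n k f (A y)) (derive1n k.+1 f (A x) * a).
Proof.
move=> sf dA; apply: dcomp => //.
have H := derivableP (sf k (A x)).
by rewrite derive1nS derive1E.
Qed.

Lemma dleaf0 f A x a : smooth f -> is_derive x 1 A a ->
  is_derive x 1 (fun y => f (A y)) (derive1n 1 f (A x) * a).
Proof. exact: (@dleaf f A 0). Qed.

Lemma derive1_of f x d : is_derive x 1 f d -> derive1 f x = d.
Proof. by move=> H; rewrite derive1E derive_val. Qed.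

Lemma dU f (k : nat) (y : R) : smooth f -> is_derive y 1 (derive1n k f) (derive1n k.+1 f y).
Proof. move=> sf; have H := derivableP (sf k y). by rewrite derive1nS derive1E. Qed.

Lemma lin_n (f g : R -> R) (e : R) n :
  (forall k (y : R), (k < n)%N -> is_derive y 1 (derive1n k f) (derive1n k.+1 f y)) ->
  (forall k (y : R), (k < n)%N -> is_derive y 1 (derive1n k g) (derive1n k.+1 g y)) ->
  derive1n n (fun y => f y + e * g y) = fun y => derive1n n f y + e * derive1n n g y.
Proof.
elim: n => [|n IH] df dg; first by [].
have IH' := IH (fun k y kn => df k y (ltnW (kn : (k < n)%N))) (fun k y kn => dg k y (ltnW (kn : (k < n)%N))).
rewrite derive1nS IH'.
apply: funext => y; apply: derive1_of.
eapply is_derive_eq.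
  eapply (dD (derive1n n f) (fun y => e * derive1n n g y)); first exact: (df n y (ltnSn n)).
  eapply (dM (fun _ => e) (derive1n n g)); first exact: dC.
  exact: (dg n y (ltnSn n)).
by cbv beta; ring.
Qed.
End D.
Arguments derive1_of {R f x d}.
Arguments lin_n {R f g} e n.

Ltac dtac := lazymatch goal with
| |- is_derive _ _ (fun _ => ?K) _ => apply: dC
| |- is_derive _ _ (fun y => y) _ => apply: dI
| |- is_derive _ _ (fun y => @?A y + @?B y) _ => eapply (@dD _ A B); [dtac|dtac]
| |- is_derive _ _ (fun y => @?A y - @?B y) _ => eapply (@dB _ A B); [dtac|dtac]
| |- is_derive _ _ (fun y => - @?A y) _ => eapply (@dN _ A); dtac
| |- is_derive _ _ (fun y => @?A y * @?B y) _ => eapply (@dM _ A B); [dtac|dtac]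
| |- is_derive _ _ (fun y => @?A y ^+ (S ?n)) _ => eapply (@dXS _ A n); dtac
| |- is_derive _ _ (fun y => derive1n ?k ?f (@?A y)) _ =>
    eapply (@dleaf _ f A k); [assumption|dtac]
| |- is_derive _ _ (fun y => ?f (@?A y)) _ =>
    is_var f; eapply (@dleaf0 _ f A); [assumption|dtac]
end.

Ltac genj c u y :=
  generalize (derive1n 4 c (u y)) (derive1n 3 c (u y)) (derive1n 2 c (u y)) (derive1n 1 c (u y)) (c (u y));
  generalize (derive1n 5 u y) (derive1n 4 u y) (derive1n 3 u y) (derive1n 2 u y) (derive1n 1 u y) (u y).

Ltac drw := match goal with |- context [derive1 ?F ?x] =>
  let H := fresh "H" in
  eassert (H : is_derive x 1 F _); [dtac | rewrite (derive1_of H); clear H] end.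

Definition Rj1 {R : realType} (h u0 u1 u2 u3 u4 u5 c0 c1 c2 c3 c4 : R) : R :=
  u1 ^+ 2 + u0 * u2 + 3 * h ^+ 2 * u1 ^+ 2 * u2 * c0 + h ^+ 2 * u1 ^+ 4 * c1.

Definition Rj2 {R : realType} (h u0 u1 u2 u3 u4 u5 c0 c1 c2 c3 c4 : R) : R :=
  3 * u1 * u2 + u0 * u3 + 6 * h ^+ 2 * u1 * u2 ^+ 2 * c0 + 3 * h ^+ 2 * u1 ^+ 2 * u3 * c0 + 7 * h ^+ 2 * u1 ^+ 3 * u2 * c1 + h ^+ 2 * u1 ^+ 5 * c2.

Definition Rj3 {R : realType} (h u0 u1 u2 u3 u4 u5 c0 c1 c2 c3 c4 : R) : R :=
  3 * u2 ^+ 2 + 4 * u1 * u3 + u0 * u4 + 6 * h ^+ 2 * u2 ^+ 3 * c0 + 18 * h ^+ 2 * u1 * u2 * u3 * c0 + 3 * h ^+ 2 * u1 ^+ 2 * u4 * c0 + 27 * h ^+ 2 * u1 ^+ 2 * u2 ^+ 2 * c1 + 10 * h ^+ 2 * u1 ^+ 3 * u3 * c1 + 12 * h ^+ 2 * u1 ^+ 4 * u2 * c2 + h ^+ 2 * u1 ^+ 6 * c3.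

Definition Rj4 {R : realType} (h u0 u1 u2 u3 u4 u5 c0 c1 c2 c3 c4 : R) : R :=
  10 * u2 * u3 + 5 * u1 * u4 + u0 * u5 + 36 * h ^+ 2 * u2 ^+ 2 * u3 * c0 + 18 * h ^+ 2 * u1 * u3 ^+ 2 * c0 + 24 * h ^+ 2 * u1 * u2 * u4 * c0 + 60 * h ^+ 2 * u1 * u2 ^+ 3 * c1 + 3 * h ^+ 2 * u1 ^+ 2 * u5 * c0 + 102 * h ^+ 2 * u1 ^+ 2 * u2 * u3 * c1 + 13 * h ^+ 2 * u1 ^+ 3 * u4 * c1 + 75 * h ^+ 2 * u1 ^+ 3 * u2 ^+ 2 * c2 + 22 * h ^+ 2 * u1 ^+ 4 * u3 * c2 + 18 * h ^+ 2 * u1 ^+ 5 * u2 * c3 + h ^+ 2 * u1 ^+ 7 * c4.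

Definition Aj0 {R : realType} (u0 u1 u2 u3 u4 u5 c0 c1 c2 c3 c4 : R) : R :=
  u0.

Definition Bj0 {R : realType} (u0 u1 u2 u3 u4 u5 c0 c1 c2 c3 c4 : R) : R :=
  u1.

Definition Aj2 {R : realType} (u0 u1 u2 u3 u4 u5 c0 c1 c2 c3 c4 : R) : R :=
  - u1 ^+ 2 * c0.

Definition Bj2 {R : realType} (u0 u1 u2 u3 u4 u5 c0 c1 c2 c3 c4 : R) : R :=
  - 2 * u1 * u2 * c0 - u1 ^+ 3 * c1.

Definition Aj4 {R : realType} (u0 u1 u2 u3 u4 u5 c0 c1 c2 c3 c4 : R) : R :=
  2 * u1 ^+ 2 * u2 * c0 ^+ 2 + (4 / 3) * u1 ^+ 4 * c0 * c1.

Definition Bj4 {R : realType} (u0 u1 u2 u3 u4 u5 c0 c1 c2 c3 c4 : R) : R :=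
  4 * u1 * u2 ^+ 2 * c0 ^+ 2 + 2 * u1 ^+ 2 * u3 * c0 ^+ 2 + (28 / 3) * u1 ^+ 3 * u2 * c0 * c1 + (4 / 3) * u1 ^+ 5 * c1 ^+ 2 + (4 / 3) * u1 ^+ 5 * c0 * c2.

Definition Aj6 {R : realType} (u0 u1 u2 u3 u4 u5 c0 c1 c2 c3 c4 : R) : R :=
  - 4 * u1 ^+ 2 * u2 ^+ 2 * c0 ^+ 3 - (4 / 3) * u1 ^+ 3 * u3 * c0 ^+ 3 - (26 / 3) * u1 ^+ 4 * u2 * c0 ^+ 2 * c1 - (28 / 15) * u1 ^+ 6 * c0 * c1 ^+ 2 - (14 / 15) * u1 ^+ 6 * c0 ^+ 2 * c2.

Definition Bj6 {R : realType} (u0 u1 u2 u3 u4 u5 c0 c1 c2 c3 c4 : R) : R :=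
  - 8 * u1 * u2 ^+ 3 * c0 ^+ 3 - 12 * u1 ^+ 2 * u2 * u3 * c0 ^+ 3 - (4 / 3) * u1 ^+ 3 * u4 * c0 ^+ 3 - (140 / 3) * u1 ^+ 3 * u2 ^+ 2 * c0 ^+ 2 * c1 - (38 / 3) * u1 ^+ 4 * u3 * c0 ^+ 2 * c1 - (428 / 15) * u1 ^+ 5 * u2 * c0 * c1 ^+ 2 - (214 / 15) * u1 ^+ 5 * u2 * c0 ^+ 2 * c2 - (28 / 15) * u1 ^+ 7 * c1 ^+ 3 - (28 / 5) * u1 ^+ 7 * c0 * c1 * c2 - (14 / 15) * u1 ^+ 7 * c0 ^+ 2 * c3.

Definition Aj8 {R : realType} (u0 u1 u2 u3 u4 u5 c0 c1 c2 c3 c4 : R) : R :=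
  8 * u1 ^+ 2 * u2 ^+ 3 * c0 ^+ 4 + 8 * u1 ^+ 3 * u2 * u3 * c0 ^+ 4 + (2 / 3) * u1 ^+ 4 * u4 * c0 ^+ 4 + (112 / 3) * u1 ^+ 4 * u2 ^+ 2 * c0 ^+ 3 * c1 + 8 * u1 ^+ 5 * u3 * c0 ^+ 3 * c1 + ((1 * 1000 + 138) / 45) * u1 ^+ 6 * u2 * c0 ^+ 2 * c1 ^+ 2 + (128 / 15) * u1 ^+ 6 * u2 * c0 ^+ 3 * c2 + (836 / 315) * u1 ^+ 8 * c0 * c1 ^+ 3 + ((1 * 1000 + 268) / 315) * u1 ^+ 8 * c0 ^+ 2 * c1 * c2 + (16 / 35) * u1 ^+ 8 * c0 ^+ 3 * c3.

Definition Bj8 {R : realType} (u0 u1 u2 u3 u4 u5 c0 c1 c2 c3 c4 : R) : R :=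
  16 * u1 * u2 ^+ 4 * c0 ^+ 4 + 48 * u1 ^+ 2 * u2 ^+ 2 * u3 * c0 ^+ 4 + 8 * u1 ^+ 3 * u3 ^+ 2 * c0 ^+ 4 + (32 / 3) * u1 ^+ 3 * u2 * u4 * c0 ^+ 4 + (544 / 3) * u1 ^+ 3 * u2 ^+ 3 * c0 ^+ 3 * c1 + (2 / 3) * u1 ^+ 4 * u5 * c0 ^+ 4 + (440 / 3) * u1 ^+ 4 * u2 * u3 * c0 ^+ 3 * c1 + (32 / 3) * u1 ^+ 5 * u4 * c0 ^+ 3 * c1 + ((3 * 1000 + 956) / 15) * u1 ^+ 5 * u2 ^+ 2 * c0 ^+ 2 * c1 ^+ 2 + ((1 * 1000 + 328) / 15) * u1 ^+ 5 * u2 ^+ 2 * c0 ^+ 3 * c2 + ((2 * 1000 + 218) / 45) * u1 ^+ 6 * u3 * c0 ^+ 2 * c1 ^+ 2 + (248 / 15) * u1 ^+ 6 * u3 * c0 ^+ 3 * c2 + ((1 * 1000 + 508) / 21) * u1 ^+ 7 * u2 * c0 * c1 ^+ 3 + ((2 * 1000 + 276) / 21) * u1 ^+ 7 * u2 * c0 ^+ 2 * c1 * c2 + (256 / 21) * u1 ^+ 7 * u2 * c0 ^+ 3 * c3 + (836 / 315) * u1 ^+ 9 * c1 ^+ 4 + ((5 * 1000 + 44) / 315) * u1 ^+ 9 * c0 * c1 ^+ 2 * c2 + ((1 * 1000 + 268) / 315) * u1 ^+ 9 * c0 ^+ 2 * c2 ^+ 2 + (340 / 63) * u1 ^+ 9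 * c0 ^+ 2 * c1 * c3 + (16 / 35) * u1 ^+ 9 * c0 ^+ 3 * c4.

Definition Tj10 {R : realType} (u0 u1 u2 u3 u4 u5 c0 c1 c2 c3 c4 : R) : R :=
  240 * u1 ^+ 3 * u2 ^+ 4 * c0 ^+ 5 + 360 * u1 ^+ 4 * u2 ^+ 2 * u3 * c0 ^+ 5 + 36 * u1 ^+ 5 * u3 ^+ 2 * c0 ^+ 5 + 48 * u1 ^+ 5 * u2 * u4 * c0 ^+ 5 + ((1 * 1000 + 416)) * u1 ^+ 5 * u2 ^+ 3 * c0 ^+ 4 * c1 + 2 * u1 ^+ 6 * u5 * c0 ^+ 5 + 748 * u1 ^+ 6 * u2 * u3 * c0 ^+ 4 * c1 + 38 * u1 ^+ 7 * u4 * c0 ^+ 4 * c1 + ((24 * 1000 + 104) / 15) * u1 ^+ 7 * u2 ^+ 2 * c0 ^+ 3 * c1 ^+ 2 + ((6 * 1000 + 182) / 15) * u1 ^+ 7 * u2 ^+ 2 * c0 ^+ 4 * c2 + ((3 * 1000 + 298) / 15) * u1 ^+ 8 * u3 * c0 ^+ 3 * c1 ^+ 2 + (844 / 15) * u1 ^+ 8 * u3 * c0 ^+ 4 * c2 + ((15 * 1000 + 506) / 35) * u1 ^+ 9 * u2 * c0 ^+ 2 * c1 ^+ 3 + ((143 * 1000 + 132) / 315) * u1 ^+ 9 * u2 * c0 ^+ 3 * c1 * c2 + ((4 * 1000 + 148) / 105) * u1 ^+ 9 * u2 * c0 ^+ 4 * c3 + (836 / 35) * u1 ^+ 11 * c0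 * c1 ^+ 4 + ((7 * 1000 + 718) / 105) * u1 ^+ 11 * c0 ^+ 2 * c1 ^+ 2 * c2 + ((3 * 1000 + 956) / 315) * u1 ^+ 11 * c0 ^+ 3 * c2 ^+ 2 + ((5 * 1000 + 372) / 315) * u1 ^+ 11 * c0 ^+ 3 * c1 * c3 + (118 / 105) * u1 ^+ 11 * c0 ^+ 4 * c4.

Definition Qp {R : realType} (u0 u1 u2 u3 u4 u5 c0 c1 c2 c3 c4 : R) : {poly R} :=
  (Tj10 u0 u1 u2 u3 u4 u5 c0 c1 c2 c3 c4 - (Aj2 u0 u1 u2 u3 u4 u5 c0 c1 c2 c3 c4 * Bj8 u0 u1 u2 u3 u4 u5 c0 c1 c2 c3 c4 + Aj4 u0 u1 u2 u3 u4 u5 c0 c1 c2 c3 c4 * Bj6 u0 u1 u2 u3 u4 u5 c0 c1 c2 c3 c4 + Aj6 u0 u1 u2 u3 u4 u5 c0 c1 c2 c3 c4 * Bj4 u0 u1 u2 u3 u4 u5 c0 c1 c2 c3 c4 + Aj8 u0 u1 u2 u3 u4 u5 c0 c1 c2 c3 c4 * Bj2 u0 u1 u2 u3 u4 u5 c0 c1 c2 c3 c4))%:P * 'X^0 + (- (Aj4 u0 u1 u2 u3 u4 u5 c0 c1 c2 c3 c4 * Bj8 u0 u1 u2 u3 u4 u5 c0 c1 c2 c3 c4 + Aj6 u0 u1 u2 u3 u4 u5 c0 c1 c2 c3 c4 * Bj6 u0 u1 u2 u3 u4 u5 c0 c1 c2 c3 c4 + Aj8 u0 u1 u2 u3 u4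 u5 c0 c1 c2 c3 c4 * Bj4 u0 u1 u2 u3 u4 u5 c0 c1 c2 c3 c4))%:P * 'X^2 + (- (Aj6 u0 u1 u2 u3 u4 u5 c0 c1 c2 c3 c4 * Bj8 u0 u1 u2 u3 u4 u5 c0 c1 c2 c3 c4 + Aj8 u0 u1 u2 u3 u4 u5 c0 c1 c2 c3 c4 * Bj6 u0 u1 u2 u3 u4 u5 c0 c1 c2 c3 c4))%:P * 'X^4 + (- (Aj8 u0 u1 u2 u3 u4 u5 c0 c1 c2 c3 c4 * Bj8 u0 u1 u2 u3 u4 u5 c0 c1 c2 c3 c4))%:P * 'X^6.

Lemma Qp_eval {R : realType} (h u0 u1 u2 u3 u4 u5 c0 c1 c2 c3 c4 : R) :
  (Qp u0 u1 u2 u3 u4 u5 c0 c1 c2 c3 c4).[h] = (Tj10 u0 u1 u2 u3 u4 u5 c0 c1 c2 c3 c4 - (Aj2 u0 u1 u2 u3 u4 u5 c0 c1 c2 c3 c4 * Bj8 u0 u1 u2 u3 u4 u5 c0 c1 c2 c3 c4 + Aj4 u0 u1 u2 u3 u4 u5 c0 c1 c2 c3 c4 * Bj6 u0 u1 u2 u3 u4 u5 c0 c1 c2 c3 c4 + Aj6 u0 u1 u2 u3 u4 u5 c0 c1 c2 c3 c4 * Bj4 u0 u1 u2 u3 u4 u5 c0 c1 c2 c3 c4 + Aj8 u0 u1 u2 u3 u4 u5 c0 c1 c2 c3 c4 * Bj2 u0 u1 u2 u3 u4 u5 c0 c1 c2 c3 c4)) * h ^+ 0 + (- (Aj4 u0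 u1 u2 u3 u4 u5 c0 c1 c2 c3 c4 * Bj8 u0 u1 u2 u3 u4 u5 c0 c1 c2 c3 c4 + Aj6 u0 u1 u2 u3 u4 u5 c0 c1 c2 c3 c4 * Bj6 u0 u1 u2 u3 u4 u5 c0 c1 c2 c3 c4 + Aj8 u0 u1 u2 u3 u4 u5 c0 c1 c2 c3 c4 * Bj4 u0 u1 u2 u3 u4 u5 c0 c1 c2 c3 c4)) * h ^+ 2 + (- (Aj6 u0 u1 u2 u3 u4 u5 c0 c1 c2 c3 c4 * Bj8 u0 u1 u2 u3 u4 u5 c0 c1 c2 c3 c4 + Aj8 u0 u1 u2 u3 u4 u5 c0 c1 c2 c3 c4 * Bj6 u0 u1 u2 u3 u4 u5 c0 c1 c2 c3 c4)) * h ^+ 4 + (- (Aj8 u0 u1 u2 u3 u4 u5 c0 c1 c2 c3 c4 * Bj8 u0 u1 u2 u3 u4 u5 c0 c1 c2 c3 c4)) * h ^+ 6.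
Proof. by rewrite /Qp !hornerE. Qed.

Definition Jet {R : realType} (F : R -> R -> R -> R -> R -> R -> R -> R -> R -> R -> R -> R -> R)
  (h : R) (c u : R -> R) (y : R) : R :=
  F h (u y) (derive1n 1 u y) (derive1n 2 u y) (derive1n 3 u y) (derive1n 4 u y) (derive1n 5 u y)
    (c (u y)) (derive1n 1 c (u y)) (derive1n 2 c (u y)) (derive1n 3 c (u y)) (derive1n 4 c (u y)).

Section Rhs.
Variables (R : realType) (h : R) (c u : R -> R).
Hypotheses (sc : smooth c) (su : smooth u).

Lemma stepR1 (y : R) : is_derive y 1 (rhs h c u) (Jet Rj1 h c u y).
Proof. eapply is_derive_eq. rewrite /rhs. dtac. rewrite /Jet /Rj1; cbv beta; genj c u y; intros; ring. Qed.
Lemma stepR2 (y : R) : is_derive y 1 (Jet Rj1 h c u) (Jet Rj2 h c u y).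
Proof. eapply is_derive_eq. rewrite /Jet /Rj1. cbv beta. dtac. rewrite /Jet /Rj2; cbv beta; genj c u y; intros; ring. Qed.
Lemma stepR3 (y : R) : is_derive y 1 (Jet Rj2 h c u) (Jet Rj3 h c u y).
Proof. eapply is_derive_eq. rewrite /Jet /Rj2. cbv beta. dtac. rewrite /Jet /Rj3; cbv beta; genj c u y; intros; ring. Qed.
Lemma stepR4 (y : R) : is_derive y 1 (Jet Rj3 h c u) (Jet Rj4 h c u y).
Proof. eapply is_derive_eq. rewrite /Jet /Rj3. cbv beta. dtac. rewrite /Jet /Rj4; cbv beta; genj c u y; intros; ring. Qed.

Lemma rhs1 : derive1n 1 (rhs h c u) = Jet Rj1 h c u.
Proof. by apply: funext => y; rewrite derive1n1 (derive1_of (stepR1 y)). Qed.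
Lemma rhs2 : derive1n 2 (rhs h c u) = Jet Rj2 h c u.
Proof. by apply: funext => y; rewrite derive1nS rhs1 (derive1_of (stepR2 y)). Qed.
Lemma rhs3 : derive1n 3 (rhs h c u) = Jet Rj3 h c u.
Proof. by apply: funext => y; rewrite derive1nS rhs2 (derive1_of (stepR3 y)). Qed.
Lemma rhs4 : derive1n 4 (rhs h c u) = Jet Rj4 h c u.
Proof. by apply: funext => y; rewrite derive1nS rhs3 (derive1_of (stepR4 y)). Qed.

Lemma rhs_der (k : nat) (y : R) : (k < 4)%N ->
  is_derive y 1 (derive1n k (rhs h c u)) (derive1n k.+1 (rhs h c u) y).
Proof.
case: k => [_|[_|[_|[_|//]]]].
- by rewrite rhs1; apply: stepR1.
- by rewrite rhs1 rhs2; apply: stepR2.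
- by rewrite rhs2 rhs3; apply: stepR3.
- by rewrite rhs3 rhs4; apply: stepR4.
Qed.
End Rhs.

Theorem mainTheorem5 (R : realType) (c u : R -> R) :
  smooth c -> smooth u ->
  forall x : R, exists p : {poly R}, forall h : R,
    miura_t h c u x - miura h c u x * derive1n 1 (miura h c u) x = h ^+ 10 * p.[h].
Proof.
move=> sc su x.
exists (Qp (u x) (derive1n 1 u x) (derive1n 2 u x) (derive1n 3 u x) (derive1n 4 u x) (derive1n 5 u x)
  (c (u x)) (derive1n 1 c (u x)) (derive1n 2 c (u x)) (derive1n 3 c (u x)) (derive1n 4 c (u x))).
move=> h.
rewrite Qp_eval.
have L : forall n, (n <= 4)%N -> forall e : R,
    derive1n n (fun y => u y + e * rhs h c u y) =
    fun y => derive1n n u y + e * derive1n n (rhs h c u) y.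
  move=> n n4 e; apply: lin_n => k y kn.
    exact: dU.
  by apply: (@rhs_der _ h c u sc su); exact: leq_trans kn n4.
have E : forall e : R, miura h c (fun y => u y + e * rhs h c u y) x =
  miura_poly h (u x + e * rhs h c u x) (derive1n 1 u x + e * derive1n 1 (rhs h c u) x)
   (derive1n 2 u x + e * derive1n 2 (rhs h c u) x) (derive1n 3 u x + e * derive1n 3 (rhs h c u) x)
   (derive1n 4 u x + e * derive1n 4 (rhs h c u) x)
   (c (u x + e * rhs h c u x)) (derive1n 1 c (u x + e * rhs h c u x))
   (derive1n 2 c (u x + e * rhs h c u x)) (derive1n 3 c (u x + e * rhs h c u x)).
  move=> e; rewrite /miura.
  by rewrite (L 1%N isT e) (L 2%N isT e) (L 3%N isT e) (L 4%N isT e).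
rewrite /miura_t (funext E) /miura_poly.
drw.
cbv beta.
repeat match goal with |- context [?t] =>
  lazymatch t with @Algebra.add _ (u x) (@GRing.mul _ _ (rhs h c u x)) =>
  let w := fresh "w" in let Hw := fresh "Hw" in
  assert (Z : t = u x) by (rewrite mul0r addr0 //);
  move: Z; generalize t => w Hw; subst w end end.
rewrite (@rhs1 _ h c u sc su) (@rhs2 _ h c u sc su) (@rhs3 _ h c u sc su) (@rhs4 _ h c u sc su).
rewrite [derive1n 1 (miura _ _ _)]derive1n1 /miura /miura_poly.
drw.
rewrite /rhs /Jet /Rj1 /Rj2 /Rj3 /Rj4 /Aj0 /Aj2 /Aj4 /Aj6 /Aj8 /Bj0 /Bj2 /Bj4 /Bj6 /Bj8 /Tj10.
cbv beta.
genj c u x.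
intros.
field; done.
Qed.
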